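(* Let $X,Y$ be finite sets and $F_X,F_Y$ filtrations over $X$ and $Y$. If $F_X$ and $F_Y$ are weakly equivalent, then $\mathbf{mgm}(F_X)=\mathbf{mgm}(F_Y)$ as multisets of intervals.
   Context: $\mathbf{pow}(X)$ is the set of nonempty subsets of $X$; a filtration over $X$ is an order-preserving map $F_X:(\mathbf{pow}(X),\subset)\to(\mathbb{R},\leq)$. For a surjection $\varphi_X:Z\twoheadrightarrow X$, the pullback filtration is $\varphi_X^*F_X:\mathbf{pow}(Z)\to\mathbb{R}$, $\kappa\mapsto F_X(\varphi_X(\kappa))$. $F_X,F_Y$ are weakly equivalent if there exist a finite set $Z$ and surjections $\varphi_X:Z\twoheadrightarrow X$, $\varphi_Y:Z\twoheadrightarrow Y$ with $\varphi_X^*F_X=\varphi_Y^*F_Y$. The mergegram of $F_X$: let $C_X(t)$ be the set of inclusion-maximal elements of $\{\sigma\in\mathbf{pow}(X)\mid F_X(\sigma)\leq t\}$; for nonempty $\sigma$, $I_\sigma:=\{t\in\mathbb{R}\mid\sigma\in C_X(t)\}$ (equivalently $I_\sigma=[F_X(\sigma),\min_{\sigma\subsetneq\tau\subset X}F_X(\tau))$ with $\min\emptyset=+\infty$); $\mathbf{mgm}(F_X)$ is the multiset of the nonempty $I_\sigma$, one entry per nonempty $\sigma\subset X$ with $I_\sigma\neq\emptyset$. *)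

(* Defs.v *)
From HB Require Import structures.
From mathcomp Require Import all_boot all_order all_algebra.
From mathcomp Require Import reals.
Set Implicit Arguments. Unset Strict Implicit. Unset Printing Implicit Defensive.
Import Order.TTheory GRing.Theory Num.Theory.
Local Open Scope ring_scope.

(* Subsets of a finite set X are {set X}; pow(X) = nonempty ones.
   A filtration is a function on {set X} (its value on set0 is irrelevant)
   that is order preserving on nonempty subsets. *)
Definition filtration (R : realType) (X : finType) (F : {set X} -> R) : Prop :=
  forall s t : {set X}, s != set0 -> s \subset t -> F s <= F t.

Definition pullback (R : realType) (Z X : finType) (phi : Z -> X)
  (F : {set X} -> R) : {set Z} -> R := fun k => F (phi @: k).

Definition surjective_map (A B : Type) (f : A -> B) : Prop :=
  forall b, exists a, f a = b.

Definition weakly_equivalent (R : realType) (X Y : finType)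
  (FX : {set X} -> R) (FY : {set Y} -> R) : Prop :=
  exists (Z : finType) (phX : Z -> X) (phY : Z -> Y),
    surjective_map phX /\ surjective_map phY /\
    forall k : {set Z}, k != set0 -> pullback phX FX k = pullback phY FY k.

(* Upper end of I_sigma: min_{sigma ⊊ tau} F tau, +oo if no such tau
   (as an interval bound, BLeft = open upper end ")" ). *)
Definition mgm_upper (R : realType) (X : finType) (F : {set X} -> R)
  (s : {set X}) : itv_bound R :=
  \big[Order.min/(BInfty R false)]_(t : {set X} | s \proper t) BLeft (F t).

Definition mgm_itv (R : realType) (X : finType) (F : {set X} -> R)
  (s : {set X}) : interval R :=
  Interval (BLeft (F s)) (mgm_upper F s).

Definition mgm_nonempty (R : realType) (X : finType) (F : {set X} -> R)
  (s : {set X}) : bool :=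
  (BLeft (F s) < mgm_upper F s)%O.

(* The mergegram as a list of intervals (a multiset, compared up to perm_eq):
   one entry per nonempty sigma with I_sigma nonempty. *)
Definition mgm (R : realType) (X : finType) (F : {set X} -> R) : seq (interval R) :=
  [seq mgm_itv F s | s <- enum [pred s : {set X} | (s != set0) && mgm_nonempty F s]].

(* Main.v *)
Require Import Defs.
From HB Require Import structures.
From mathcomp Require Import all_boot all_order all_algebra.
From mathcomp Require Import reals.
Set Implicit Arguments. Unset Strict Implicit. Unset Printing Implicit Defensive.
Import Order.TTheory GRing.Theory Num.Theory.

Section PB.
Variables (R : realType) (Z X : finType) (phi : Z -> X) (F : {set X} -> R).
Hypothesis phis : surjective_map phi.
Let G := pullback phi F.

Lemma L1 (s : {set X}) : phi @: (phi @^-1: s) = s.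
Proof.
apply/setP => x; apply/imsetP/idP => [[z]|xs].
  by rewrite inE => ? ->.
by have [z zx] := phis x; exists z; rewrite // inE zx.
Qed.

Lemma L2 (k : {set Z}) : phi @^-1: (phi @: k) = k ->
  mgm_upper G k = mgm_upper F (phi @: k).
Proof.
move=> sat; rewrite /mgm_upper; apply/le_anti/andP; split.
  apply: le_bigmin; first exact: bigmin_le_id.
  move=> r pr; apply: (@bigmin_inf _ _ _ _ (phi @^-1: r)).
    rewrite properE -{1}sat preimsetS ?(proper_sub pr) //=.
    apply/negP => /(imsetS phi); rewrite !L1 => h.
    by move: pr; rewrite properE h andbF.
  by rewrite /G /pullback L1.
apply: le_bigmin; first exact: bigmin_le_id.
move=> t pt; apply: (@bigmin_inf _ _ _ _ (phi @: t)).
  rewrite properE imsetS ?(proper_sub pt) //=.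
  apply/negP => h.
  have : t \subset k.
    rewrite -sat; apply/subsetP => z zt; rewrite inE.
    by apply: (subsetP h); apply: imset_f.
  by move=> h2; move: pt; rewrite properE h2 andbF.
by [].
Qed.

Lemma L3 (k : {set Z}) : mgm_nonempty G k -> phi @^-1: (phi @: k) = k.
Proof.
move=> ne; apply/eqP; rewrite eqEsubset; apply/andP; split; last first.
  by apply/subsetP => z zk; rewrite inE imset_f.
apply/negPn/negP => ns.
have pk : k \proper phi @^-1: (phi @: k).
  rewrite properE ns andbT; apply/subsetP => z zk; rewrite inE imset_f //.
move: ne; rewrite /mgm_nonempty.
have : (mgm_upper G k <= BLeft (G (phi @^-1: (phi @: k))))%O.
  exact: bigmin_le_cond.
rewrite /G /pullback L1 => h1 h2.
by have := lt_le_trans h2 h1; rewrite ltxx.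
Qed.

Lemma Litv (s : {set X}) : mgm_itv G (phi @^-1: s) = mgm_itv F s.
Proof.
by rewrite /mgm_itv L2 ?L1 // /G /pullback L1.
Qed.

Lemma Lpb : perm_eq (mgm G) (mgm F).
Proof.
rewrite /mgm.
set PG := [pred s : {set Z} | (s != set0) && mgm_nonempty G s].
set PF := [pred s : {set X} | (s != set0) && mgm_nonempty F s].
have inj : injective (fun s : {set X} => phi @^-1: s).
  by move=> a b e; rewrite -(L1 a) e L1.
have pe : perm_eq (enum PG) (map (fun s : {set X} => phi @^-1: s) (enum PF)).
  apply: uniq_perm; first exact: enum_uniq.
    by rewrite map_inj_uniq // enum_uniq.
  move=> k; rewrite mem_enum; apply/idP/mapP.
    case/andP => kn ne; exists (phi @: k); last by rewrite L3.
    rewrite mem_enum /PF inE /= imset_eq0 kn /= /mgm_nonempty -L2 ?L3 //.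
  move=> [s]; rewrite mem_enum => /andP [sn ne] ->.
  rewrite /PG inE /=; apply/andP; split.
    by apply/negP => /eqP h; move: sn; rewrite -(L1 s) h imset0 eqxx.
  by rewrite /mgm_nonempty L2 ?L1 // /G /pullback L1.
apply: perm_trans (perm_map _ pe) _.
rewrite -map_comp; have -> // : map (mgm_itv G \o (fun s : {set X} => phi @^-1: s)) (enum PF) = map (mgm_itv F) (enum PF).
by apply: eq_map => s /=; rewrite Litv.
Qed.
End PB.

Theorem mainTheorem14 (R : realType) (X Y : finType)
  (FX : {set X} -> R) (FY : {set Y} -> R) :
  filtration FX -> filtration FY ->
  weakly_equivalent FX FY ->
  perm_eq (mgm FX) (mgm FY).
Proof.
move=> _ _ [Z [pX [pY [sX [sY eqp]]]]].
have h1 := Lpb FX sX; have h2 := Lpb FY sY; rewrite perm_sym in h1.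
apply: perm_trans h1 _; apply: perm_trans _ h2.
have eU : forall s : {set Z}, mgm_upper (pullback pX FX) s = mgm_upper (pullback pY FY) s.
  move=> s; apply: eq_bigr => t st; rewrite eqp //.
  by apply/negP => /eqP t0; move: st; rewrite t0 properE sub0set andbF.
have eI : forall s : {set Z}, s != set0 -> mgm_itv (pullback pX FX) s = mgm_itv (pullback pY FY) s.
  by move=> s s0; rewrite /mgm_itv eU eqp.
have eP : [pred s : {set Z} | (s != set0) && mgm_nonempty (pullback pX FX) s] =i
          [pred s : {set Z} | (s != set0) && mgm_nonempty (pullback pY FY) s].
  move=> s; rewrite !inE; case s0: (s != set0) => //=.
  by rewrite /mgm_nonempty eU eqp.
rewrite /mgm (eq_enum eP); erewrite (proj1 (eq_in_map _ _ _)); first exact: perm_refl.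
by move=> s; rewrite mem_enum inE; case/andP => s0 _; rewrite eI.
Qed.
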